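(* Let $k<\omega$ and let $\mathcal E\subseteq\mathcal P(\omega)$ have the property that for every uncountable $X\subseteq\mathcal E$ there are uncountable $X_0,\dots,X_k\subseteq X$ with $\bigcap_{i\le k}\bigcup X_i$ finite. Let $\mathcal A=\{f_e:e\in\mathcal E\}$, where each $f_e$ is a function from $e$ to $\omega$ (viewed as a subset of $\omega\times\omega$). Then $\mathcal A$ has no uncountable $(k+1)$-near-Luzin subfamily: for every uncountable $\mathcal B\subseteq\mathcal A$ there are uncountable $\mathcal C_0,\dots,\mathcal C_k\subseteq\mathcal B$ with $\bigcap_{i\le k}\bigcup\mathcal C_i$ finite.
   Context: An uncountable family $\mathcal A$ is $(k+1)$-near-Luzin iff for all uncountable $\mathcal C_0,\dots,\mathcal C_k\subseteq\mathcal A$ the set $\bigcap_{i\le k}\bigcup\mathcal C_i$ is infinite. *)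

(* Defs.v *)
From mathcomp Require Import all_boot.
From mathcomp Require Export classical_sets cardinality.
Set Implicit Arguments. Unset Strict Implicit. Unset Printing Implicit Defensive.
Local Open Scope classical_set_scope.

Definition has_finite_cross (T : Type) (m : nat) (F : set (set T)) : Prop :=
  exists C : nat -> set (set T),
    (forall i, (i < m)%N -> C i `<=` F /\ ~ countable (C i)) /\
    finite_set (\bigcap_(i in [set i | (i < m)%N]) \bigcup_(x in C i) x).

Definition graph_on (e : set nat) (g : nat -> nat) : set (nat * nat) :=
  [set p | e p.1 /\ p.2 = g p.1].

(* Main.v *)
Require Import Defs.
From mathcomp Require Import all_boot.
From mathcomp Require Import classical_sets cardinality.
From mathcomp Require Import boolp.
Local Open Scope classical_set_scope.

Lemma img_countable {T U} (g : T -> U) {A : set T} :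
  countable A -> countable (g @` A).
Proof. move=> cA; exact: sub_countable (card_image_le g A) cA. Qed.

Theorem lemma5p6 (k : nat) (E : set (set nat))
  (hE : forall X : set (set nat), X `<=` E -> ~ countable X ->
          has_finite_cross k.+1 X)
  (f : set nat -> nat -> nat) :
  let A := [set graph_on e (f e) | e in E] in
  forall B : set (set (nat * nat)%type), B `<=` A -> ~ countable B ->
    has_finite_cross k.+1 B.
Proof.
move=> A B BA nB.
pose G e := graph_on e (f e).
pose X := [set e | E e /\ B (G e)].
have GK : forall e, e = fst @` G e.
  move=> e; apply/seteqP; split => [n en|_ [[n m] [en _] <-]] //.
  by exists (n, f e n).
have cimg : forall D : set (set nat), countable (G @` D) -> countable D.
  move=> D cD; have := img_countable (fun P : set (nat * nat)%type => [set x.1 | x in P]) cD; apply: sub_countable.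
  apply: subset_card_le => e De; exists (G e); first by exists e.
  by rewrite -GK.
have nX : ~ countable X.
  move=> cX; apply: nB; have := img_countable G cX; apply: sub_countable.
  apply: subset_card_le => b Bb.
  have [e Ee Ge] := BA b Bb.
  by exists e; [split => //; rewrite /G Ge | exact: Ge].

have [C [HC Hfin]] := hE X (fun e => @proj1 _ _) nX.
have [S HS] := (finite_seqP _).1 Hfin.
pose key e := [seq f e x | x <- S].
pose cls i l := [set e | C i e /\ key e = l].
have ex : forall i, exists l, (i < k.+1)%N -> ~ countable (cls i l).
  move=> i; case: (ltnP i k.+1) => hi; last by exists [::].
  case: (pselect (exists l, ~ countable (cls i l))) => [[l hl]|hn]; first by exists l.
  exfalso.
  have [CX nC] := HC i hi; apply: nC.
  apply: (@sub_countable _ _ _ (\bigcup_(l in [set: seq nat]) cls i l)).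
    apply: subset_card_le => e Ce; exists (key e) => //.
  apply: bigcup_countable; first exact: countableP.
  move=> l _; case: (pselect (countable (cls i l))) => // ncl; exfalso; apply: hn; exists l; exact: ncl.
have [L HL] := choice ex.
exists (fun i => G @` cls i (L i)); split.
  move=> i hi; split.
    by move=> _ [e [Ce _] <-]; have [CX _] := HC i hi; have [] := CX e Ce.
  move=> c; apply: (HL i hi); exact: cimg.
apply: (@sub_finite_set _ _ ([set` S] `*` [set` L 0%N])); last first.
  apply: finite_setX; [exact: finite_seq | exact: finite_seq].
move=> [n m] Hnm.
have Hn : [set` S] n.
  rewrite -HS => i hi.
  have [_ [e [Ce _] <-] [en _]] := Hnm i hi.
  by exists e.
split => //=.
have [_ [e [Ce ke] <-] [en Hm]] := Hnm 0%N (ltn0Sn k).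
rewrite /= in en Hm; rewrite /= Hm.
have enS : n \in S by [].
move: enS; rewrite -ke /key => enS.
by apply: map_f.
Qed.
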